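(* Let $G$ be a graph, $t\ge 2$ an integer and $k$ a nonnegative integer. For a set of vertices $X$, let $E_X$ denote the set of all pairs $\{u,v\}$ with $u,v\in X$, $u\neq v$. Let $\mathcal{F}'$ be a family of sets of the form $E_Z$ with $Z\subseteq V(G)$, such that for every edge $\{x,y\}$ of $G$, the family $\mathcal{F}'_{xy}=\{X\subseteq V(G)\setminus\{x,y\} : E_{X\cup\{x,y\}}\in\mathcal{F}'\}$ satisfies $|\mathcal{F}'_{xy}|\le 2\cdot(t-2)!\cdot k^{t-2}$. If $|\mathcal{F}'|>2\cdot(t-2)!\cdot k^{t-1}$, then $\mathcal{F}'$ has no hitting set consisting of at most $k$ edges of $G$.
   Context: A set $S$ is a hitting set of a family $\mathcal{F}$ of sets if $S\cap F\neq\emptyset$ for every $F\in\mathcal{F}$. (In the paper this is phrased as: after exhaustively applying the sunflower reduction rule, so that $|\mathcal{F}'_{xy}|\le 2(t-2)!k^{t-2}$ for every edge, the rule ''if $|\mathcal{F}'|>2(t-2)!k^{t-1}$, return a fixed no-instance'' is safe.) *)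

(* Defs.v *)
From mathcomp Require Import all_boot.
Set Implicit Arguments. Unset Strict Implicit. Unset Printing Implicit Defensive.

Definition pairs (T : finType) (X : {set T}) : {set {set T}} :=
  [set p : {set T} | (p \subset X) && (#|p| == 2)].

Definition edges (T : finType) (e : rel T) : {set {set T}} :=
  [set p : {set T} | [exists x, exists y, e x y && (p == [set x; y])]].

Definition link (T : finType) (F : {set {set {set T}}}) (x y : T) : {set {set T}} :=
  [set X : {set T} | (X \subset ~: [set x; y]) && (pairs (X :|: [set x; y]) \in F)].

Definition is_hitting_set (T : finType) (S : {set {set T}}) (F : {set {set {set T}}}) :=
  forall A, A \in F -> S :&: A != set0.

(* Main.v *)
Require Import Defs.
From mathcomp Require Import all_boot.

Lemma card_bigcup_le (T I : finType) (P : {pred I}) (G : I -> {set T}) :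
  #|\bigcup_(i in P) G i| <= \sum_(i in P) #|G i|.
Proof.
apply: (big_ind2 (fun (A : {set T}) n => #|A| <= n)) => //.
- by rewrite cards0.
- move=> A a B b HA HB; apply: leq_trans (leq_card_setU A B) _.
  exact: leq_add.
Qed.

Theorem lemma3 (T : finType) (e : rel T) (e_sym : symmetric e)
  (e_irr : irreflexive e) (t k : nat) (F : {set {set {set T}}})
  (Ht : 2 <= t)
  (HF : forall A, A \in F -> exists Z : {set T}, A = pairs Z)
  (Hlink : forall x y : T, e x y -> #|link F x y| <= 2 * (t - 2)`! * k ^ (t - 2))
  (Hbig : 2 * (t - 2)`! * k ^ (t - 1) < #|F|) :
  ~ (exists S : {set {set T}},
       [/\ S \subset edges e, #|S| <= k & is_hitting_set S F]).
Proof.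
move=> [S [HSe HSk HSh]].
set B := 2 * (t - 2)`! * k ^ (t - 2).
pose L (p : {set T}) := [set X : {set T} | (X \subset ~: p) && (pairs (X :|: p) \in F)].
pose G (p : {set T}) := [set pairs (X :|: p) | X in L p].
have sub : F \subset \bigcup_(p in S) G p.
  apply/subsetP => A HA.
  have [Z HZ] := HF A HA.
  have /set0Pn [p /setIP [pS pA]] := HSh A HA.
  apply/bigcupP; exists p => //.
  have pZ : p \subset Z by move: pA; rewrite HZ inE => /andP [].
  have eqZ : (Z :\: p) :|: p = Z.
    apply/setP => v; rewrite !inE; case vp: (v \in p) => /=; last by rewrite orbF.
    by rewrite (subsetP pZ v vp).
  apply/imsetP; exists (Z :\: p).
    by rewrite inE setDE subsetIr /= -setDE eqZ -HZ HA.
  by rewrite eqZ HZ.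
have Gb : forall p, p \in S -> #|G p| <= B.
  move=> p pS; apply: leq_trans (leq_imset_card _ _) _.
  move/subsetP: HSe => /(_ p pS); rewrite inE => /existsP [x /existsP [y /andP [exy /eqP ->]]].
  exact: Hlink.
have := leq_trans (subset_leq_card sub) (card_bigcup_le _ _ _ _).
move=> H1.
have H2 : \sum_(p in S) #|G p| <= #|S| * B.
  rewrite -sum1_card big_distrl /=; apply: leq_sum => p pS; rewrite mul1n.
  exact: Gb.
have H3 : #|S| * B <= 2 * (t - 2)`! * k ^ (t - 1).
  have -> : t - 1 = (t - 2).+1 by rewrite -subSn.
  rewrite expnS /B [k * _]mulnC [#|S| * _]mulnC mulnA.
  by rewrite leq_mul2l HSk orbT.
by move: (leq_trans H1 (leq_trans H2 H3)); rewrite leqNgt Hbig.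
Qed.
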